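(* Assume the setup of the context with $F$ formally real, and let $V_\lambda$ be a simple $H$-module of type $\lambda\in\Lambda$. Then: (a) there is a symmetric bilinear form $\langle\cdot,\cdot\rangle_\lambda:V_\lambda\times V_\lambda\to K$ which is $H$-invariant, i.e. $\langle h^\ast v,w\rangle_\lambda=\langle v,hw\rangle_\lambda$ for all $h\in H$, $v,w\in V_\lambda$, and positive definite in the sense that $\langle w,w\rangle_\lambda$ is always a sum of squares in $K$ which is $0$ only for $w=0$ (in particular it is nondegenerate); (b) for this form and every $w\in V_\lambda\setminus\{0\}$ one has $\nu(\langle w,w\rangle_\lambda)\in2\Gamma$; (c) $a_\lambda\in\Gamma$, and there exists a balanced matrix representation of type $\lambda$.
   Context: Setup: $\Gamma$ a totally ordered abelian group; $K$ a field with surjective valuation $\nu:K\to\Gamma\cup\{\infty\}$, valuation ring $\mathcal{O}$, maximal ideal $\mathfrak{m}$, residue field $F=\mathcal{O}/\mathfrak{m}$, assumed formally real ($-1$ not a sum of squares); $\nu$ of a matrix is the minimum over entries. $H$ is a finite-dimensional split semisimple $K$-algebra, symmetric with trace form $\tau$; $\Lambda$ indexes simple modules, $\chi_\lambda$ characters, Schur elements $c_\lambda$ defined by $\tau=\sum_\lambda c_\lambda^{-1}\chi_\lambda$. $\ast$ is a $K$-linear involutive antiautomorphism of $H$ and there is a $\ast$-symmetric basis, i.e. a basis $B$ with $B^\ast=B$ and $\tau(bc^\ast)=\delta_{bc}$. $a_\lambda:=-\tfrac12\nu(c_\lambda)$. An irreducible matrix representation $\rho$ of type $\lambda$ is balanced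 if $a_\lambda\in\Gamma$ and $\nu(\rho(b))\ge -a_\lambda$ for all $b$ in every $\ast$-symmetric basis. *)

(* Defs.v *)
From HB Require Import structures.
From mathcomp Require Import all_boot all_order all_algebra all_field.
Set Implicit Arguments. Unset Strict Implicit. Unset Printing Implicit Defensive.
Import Order.TTheory GRing.Theory.
Local Open Scope ring_scope.

Definition ordered_abelian_group (G : zmodType) (le : rel G) : Prop :=
  [/\ reflexive le, antisymmetric le, transitive le, total le
    & forall x y z : G, le x y -> le (x + z) (y + z)].

(* Γ ∪ {∞} is modelled as option Γ, with None = ∞. *)
Definition vle (G : zmodType) (le : rel G) (a b : option G) : bool :=
  match a, b with
  | _, None => true
  | None, Some _ => false
  | Some x, Some y => le x y
  end.

Definition vadd (G : zmodType) (a b : option G) : option G :=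
  match a, b with
  | Some x, Some y => Some (x + y)
  | _, _ => None
  end.

Definition surj_valuation (K : fieldType) (G : zmodType) (le : rel G)
    (nu : K -> option G) : Prop :=
  [/\ forall x, nu x = None <-> x = 0,
      forall x y, nu (x * y) = vadd (nu x) (nu y),
      forall x y, vle le (nu x) (nu (x + y)) || vle le (nu y) (nu (x + y))
    & forall g : G, exists x, nu x = Some g].

Definition in_valring (K : fieldType) (G : zmodType) (le : rel G)
    (nu : K -> option G) (x : K) : bool := vle le (Some 0) (nu x).
Definition in_maxideal (K : fieldType) (G : zmodType) (le : rel G)
    (nu : K -> option G) (x : K) : bool :=
  vle le (Some 0) (nu x) && (nu x != Some 0).

(* residue field F = O/m formally real: -1 is not a sum of squares in O/m,
   i.e. there are no y_1..y_n in O with -1 - sum y_i^2 in m. *)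
Definition residue_formally_real (K : fieldType) (G : zmodType) (le : rel G)
    (nu : K -> option G) : Prop :=
  ~ exists s : seq K, all (in_valring le nu) s /\
      in_maxideal le nu (- 1 - \sum_(y <- s) y ^+ 2).

Definition sum_of_squares (K : fieldType) (x : K) : Prop :=
  exists s : seq K, x = \sum_(y <- s) y ^+ 2.

Definition is_mx_repr (K : fieldType) (H : falgType K) (n : nat)
    (rho : H -> 'M[K]_n) : Prop :=
  [/\ forall (a : K) (x y : H), rho (a *: x + y) = a *: rho x + rho y,
      rho 1 = 1%:M
    & forall x y : H, rho (x * y) = rho x *m rho y].

Definition mx_repr_equiv (K : fieldType) (H : falgType K) (n : nat)
    (rho1 rho2 : H -> 'M[K]_n) : Prop :=
  exists2 P : 'M[K]_n, P \in unitmx & forall h, P *m rho1 h = rho2 h *m P.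

(* H is split semisimple, with the simple modules indexed by Lambda given
   (in matrix form) by rho lambda : H -> M_{d lambda}(K): the map
   h |-> (rho lambda h)_lambda is a K-algebra isomorphism
   H ~= prod_lambda M_{d lambda}(K) (Wedderburn), each d lambda > 0. *)
Definition split_semisimple_data (K : fieldType) (H : falgType K)
    (Lambda : finType) (d : Lambda -> nat)
    (rho : forall l : Lambda, H -> 'M[K]_(d l)) : Prop :=
  [/\ forall l, (0 < d l)%N,
      forall l, is_mx_repr (rho l),
      forall x : H, (forall l, rho l x = 0) -> x = 0
    & forall M : forall l : Lambda, 'M[K]_(d l),
        exists x : H, forall l, rho l x = M l].

Definition chi (K : fieldType) (H : falgType K) (Lambda : finType)
    (d : Lambda -> nat) (rho : forall l : Lambda, H -> 'M[K]_(d l))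
    (l : Lambda) (h : H) : K := \tr (rho l h).

Definition symmetrizing_form (K : fieldType) (H : falgType K) (tau : H -> K)
    : Prop :=
  [/\ forall (a : K) (x y : H), tau (a *: x + y) = a * tau x + tau y,
      forall x y : H, tau (x * y) = tau (y * x)
    & forall x : H, (forall y, tau (x * y) = 0) -> x = 0].

Definition linear_involutive_antiaut (K : fieldType) (H : falgType K)
    (star : H -> H) : Prop :=
  [/\ forall (a : K) (x y : H), star (a *: x + y) = a *: star x + star y,
      forall x y : H, star (x * y) = star y * star x
    & forall x : H, star (star x) = x].

Definition star_symmetric_basis (K : fieldType) (H : falgType K)
    (tau : H -> K) (star : H -> H) (B : seq H) : Prop :=
  [/\ basis_of fullv B,
      map star B =i B
    & forall b c, b \in B -> c \in B -> tau (b * star c) = (b == c)%:R].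

Definition mx_val_ge (K : fieldType) (G : zmodType) (le : rel G)
    (nu : K -> option G) (m n : nat) (M : 'M[K]_(m, n)) (g : G) : Prop :=
  forall i j, vle le (Some g) (nu (M i j)).

Definition balanced (K : fieldType) (G : zmodType) (le : rel G)
    (nu : K -> option G) (H : falgType K) (tau : H -> K) (star : H -> H)
    (n : nat) (rho' : H -> 'M[K]_n) (a : G) : Prop :=
  forall B : seq H, star_symmetric_basis tau star B ->
    forall b, b \in B -> mx_val_ge le nu (rho' b) (- a).

(* Main.v *)
Require Import Defs.
From HB Require Import structures.
From mathcomp Require Import all_boot all_order all_algebra all_field.
Import Order.TTheory GRing.Theory.
Local Open Scope ring_scope.

Module Aux.
Set Implicit Arguments. Unset Strict Implicit. Unset Printing Implicit Defensive.

Section Val.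
Variables (G : zmodType) (le : rel G) (K : fieldType) (nu : K -> option G).
Hypothesis hG : ordered_abelian_group le.
Hypothesis hnu : surj_valuation le nu.
Hypothesis hF : residue_formally_real le nu.

Lemma le_refl g : le g g. Proof. by case: hG. Qed.
Lemma le_anti g h : le g h -> le h g -> g = h.
Proof. by case: hG => _ A _ _ _ H1 H2; apply: A; rewrite H1 H2. Qed.
Lemma le_trans g h k : le g h -> le h k -> le g k.
Proof. by case: hG => _ _ T _ _; apply: T. Qed.
Lemma le_total g h : le g h || le h g. Proof. by case: hG => _ _ _ T _; apply: T. Qed.
Lemma le_addr g h z : le g h -> le (g + z) (h + z). Proof. by case: hG => _ _ _ _ A; apply: A. Qed.
Lemma le_addl g h z : le g h -> le (z + g) (z + h).
Proof. by rewrite ![z + _]addrC; apply: le_addr. Qed.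

Lemma gdouble_inj (g h : G) : g + g = h + h -> g = h.
Proof.
move=> E.
have key : forall x y, x + x = y + y -> le x y -> x = y.
  move=> x y Exy lxy.
  have h1 : le (x + x) (y + x) by apply: le_addr.
  have h2 : le (y + x) (y + y) by apply: le_addl.
  have : y + x = x + x by apply: le_anti => //; rewrite Exy.
  by move/addIr.
by case/orP: (le_total g h) => L; [apply: key | apply/esym; apply: key].
Qed.

Lemma vle_trans a b e : vle le a b -> vle le b e -> vle le a e.
Proof.
by case: a => [x|]; case: b => [y|]; case: e => [z|] //=; apply: le_trans.
Qed.
Lemma vle_total a b : vle le a b || vle le b a.
Proof. by case: a => [x|]; case: b => [y|] //=; rewrite ?orbT //; apply: le_total. Qed.
Lemma vle_refl a : vle le a a. Proof. by case: a => //= x; apply: le_refl. Qed.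

Lemma nu_None x : nu x = None <-> x = 0. Proof. by case: hnu. Qed.
Lemma nu0 : nu 0 = None. Proof. by apply/nu_None. Qed.
Lemma nuM x y : nu (x * y) = vadd (nu x) (nu y). Proof. by case: hnu. Qed.
Lemma nuS x : x != 0 -> exists g, nu x = Some g.
Proof.
move=> x0; case E: (nu x) => [g|]; first by exists g.
by move/nu_None: E => E; rewrite E eqxx in x0.
Qed.
Lemma nu_surj g : exists x, nu x = Some g. Proof. by case: hnu => _ _ _; apply. Qed.

Lemma nu1 : nu 1 = Some 0.
Proof.
have [g E] := nuS (oner_neq0 K).
have := nuM 1 1; rewrite mulr1 E /= => -[] E2.
by rewrite -[g in LHS](addr0 g) in E2; move/addrI: E2 => <-.
Qed.

Lemma nuN1 : nu (-1) = Some 0.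
Proof.
have n1 : (-1 : K) != 0 by rewrite oppr_eq0 oner_eq0.
have [g E] := nuS n1.
have := nuM (-1) (-1); rewrite mulrNN mulr1 E nu1 /= => -[] E2.
by congr Some; apply: gdouble_inj; rewrite addr0 -E2.
Qed.

Lemma nuN x : nu (- x) = nu x.
Proof. by rewrite -mulN1r nuM nuN1; case: (nu x) => //= g; rewrite add0r. Qed.

Lemma nuV x g : nu x = Some g -> nu (x^-1) = Some (- g).
Proof.
move=> E; have x0 : x != 0 by apply/eqP => x0; move: E; rewrite x0 nu0.
have [h Eh] := nuS (invr_neq0 x0).
have := nuM x (x^-1); rewrite mulfV // nu1 E Eh /= => -[] E2.
by congr Some; apply: (@addrI _ g); rewrite subrr E2.
Qed.

Lemma nuD_ge (g : G) (x y : K) : vle le (Some g) (nu x) -> vle le (Some g) (nu y) ->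
  vle le (Some g) (nu (x + y)).
Proof.
case: hnu => _ _ U _ hx hy; case/orP: (U x y) => h.
  exact: vle_trans hx h.
exact: vle_trans hy h.
Qed.

Lemma nu_sum_ge (I : eqType) (r : seq I) (F : I -> K) (g : G) :
  (forall i, i \in r -> vle le (Some g) (nu (F i))) ->
  vle le (Some g) (nu (\sum_(i <- r) F i)).
Proof.
elim: r => [|i r IH] H; first by rewrite big_nil nu0.
rewrite big_cons; apply: nuD_ge; first by apply: H; rewrite mem_head.
by apply: IH => j hj; apply: H; rewrite in_cons hj orbT.
Qed.

Lemma exists_min (s : seq K) : has (fun y => y != 0) s ->
  exists2 m, (m \in s) && (m != 0) & forall y, y \in s -> vle le (nu m) (nu y).
Proof.
elim: s => [|x s IH] //= /orP [x0|hs].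
  have [hs'|hs'] := boolP (has (fun y => y != 0) s).
    have [m /andP[ms m0] Hm] := IH hs'.
    case/orP: (vle_total (nu x) (nu m)) => L.
      exists x; first by rewrite mem_head x0.
      move=> y; rewrite in_cons => /orP[/eqP->|ys]; first exact: vle_refl.
      exact: vle_trans L (Hm _ ys).
    exists m; first by rewrite in_cons ms orbT m0.
    move=> y; rewrite in_cons => /orP[/eqP->//|ys]; exact: Hm.
  exists x; first by rewrite mem_head x0.
  move=> y; rewrite in_cons => /orP[/eqP->|ys]; first exact: vle_refl.
  move/hasPn: hs' => /(_ y ys); rewrite negbK => /eqP ->; rewrite nu0.
  by case: (nu x).
have [m /andP[ms m0] Hm] := IH hs.
case/orP: (vle_total (nu x) (nu m)) => L.
  have [x0|x0] := eqVneq x 0.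
    exists m; first by rewrite in_cons ms orbT m0.
    move=> y; rewrite in_cons => /orP[/eqP->|ys]; last exact: Hm.
    by rewrite x0 nu0; case: (nu m).
  exists x; first by rewrite mem_head x0.
  move=> y; rewrite in_cons => /orP[/eqP->|ys]; first exact: vle_refl.
  exact: vle_trans L (Hm _ ys).
exists m; first by rewrite in_cons ms orbT m0.
move=> y; rewrite in_cons => /orP[/eqP->//|ys]; exact: Hm.
Qed.

Lemma sos_val (s : seq K) : has (fun y => y != 0) s ->
  exists g, nu (\sum_(y <- s) y ^+ 2) = Some (g + g) /\
            forall y, y \in s -> vle le (Some g) (nu y).
Proof.
move=> hs; have [m /andP[ms m0] Hm] := exists_min hs.
have [g Eg] := nuS m0.
exists g; split; last by move=> y ys; rewrite -Eg; apply: Hm.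
pose z y := y / m.
have zO : forall y, y \in s -> in_valring le nu (z y).
  move=> y ys; rewrite /in_valring /z nuM (nuV Eg).
  have := Hm y ys; rewrite Eg; case: (nu y) => //= h L.
  by have := le_addr (- g) L; rewrite subrr.
have Es : \sum_(y <- s) y ^+ 2 = m ^+ 2 * \sum_(y <- s) z y ^+ 2.
  rewrite big_distrr /=; apply: eq_bigr => y _; rewrite /z.
  by rewrite expr_div_n mulrCA mulfV ?mulr1 // expf_neq0.
have ES : \sum_(y <- s) z y ^+ 2 = 1 + \sum_(y <- rem m s) z y ^+ 2.
  by rewrite (perm_big _ (perm_to_rem ms)) big_cons /z mulfV // expr1n.
have nS : nu (\sum_(y <- s) z y ^+ 2) = Some 0.
  have SO : in_valring le nu (\sum_(y <- s) z y ^+ 2).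
    rewrite /in_valring; apply: nu_sum_ge => y ys; rewrite expr2 nuM.
    have := zO y ys; rewrite /in_valring; case: (nu (z y)) => //= h L.
    by have := le_addr h L; rewrite add0r => L2; apply: le_trans L L2.
  case E: (nu _) => [h|]; last first.
    exfalso; apply: hF; exists (map z (rem m s)); split.
      by apply/allP => _ /mapP[y /mem_rem ys ->]; apply: zO.
    by rewrite big_map -opprD -ES /in_maxideal nuN E.
  have [->//|hn] := eqVneq h 0.
  exfalso; apply: hF; exists (map z (rem m s)); split.
    by apply/allP => _ /mapP[y /mem_rem ys ->]; apply: zO.
  rewrite big_map -opprD -ES /in_maxideal nuN E.
  by move: SO; rewrite /in_valring E /= => ->; apply/eqP => -[] h0; rewrite h0 eqxx in hn.
by rewrite Es nuM nS expr2 nuM Eg /= addr0.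
Qed.

Lemma sos_eq0 (s : seq K) : \sum_(y <- s) y ^+ 2 = 0 -> forall y, y \in s -> y = 0.
Proof.
move=> E y ys; apply/eqP; apply/negPn/negP => y0.
have [g [Eg _]] := sos_val (introT hasP (ex_intro2 _ _ y ys y0)).
by move: Eg; rewrite E nu0.
Qed.

End Val.

Section Lin.
Variables (K : fieldType) (H : falgType K).
Definition slin (f : H -> K) := forall a x y, f (a *: x + y) = a * f x + f y.
Variable f : H -> K.
Hypothesis hf : slin f.
Lemma slin0 : f 0 = 0.
Proof. by have := hf 1 0 0; rewrite addr0 scaler0 mul1r => E; apply: (@addrI _ (f 0)); rewrite -E addr0. Qed.
Lemma slinD x y : f (x + y) = f x + f y.
Proof. by have := hf 1 x y; rewrite scale1r mul1r. Qed.
Lemma slinZ a x : f (a *: x) = a * f x.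
Proof. by have := hf a x 0; rewrite addr0 slin0 addr0. Qed.
Lemma slinN x : f (- x) = - f x.
Proof. by rewrite -scaleN1r slinZ mulN1r. Qed.
Lemma slinB x y : f (x - y) = f x - f y.
Proof. by rewrite slinD slinN. Qed.
Lemma slin_sum (I : Type) (r : seq I) (P : pred I) (F : I -> H) :
  f (\sum_(i <- r | P i) F i) = \sum_(i <- r | P i) f (F i).
Proof. exact: (big_morph f slinD slin0). Qed.
End Lin.

Section Alg.
Variables (K : fieldType) (H : falgType K) (tau : H -> K) (star : H -> H) (B : seq H).
Hypothesis htau : symmetrizing_form tau.
Hypothesis hstar : linear_involutive_antiaut star.
Hypothesis hB : star_symmetric_basis tau star B.

Lemma tau_slin : slin tau. Proof. by case: htau. Qed.
Lemma tauC x y : tau (x * y) = tau (y * x). Proof. by case: htau => _ C _; apply: C. Qed.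
Lemma tau_nondeg x : (forall y, tau (x * y) = 0) -> x = 0. Proof. by case: htau => _ _; apply. Qed.
Lemma starK x : star (star x) = x. Proof. by case: hstar => _ _; apply. Qed.
Lemma starM x y : star (x * y) = star y * star x. Proof. by case: hstar => _ C _; apply: C. Qed.
Lemma star0 : star 0 = 0.
Proof.
case: hstar => L _ _; have := L 1 0 0; rewrite addr0 scaler0 scale1r => E.
by apply: (@addrI _ (star 0)); rewrite -E addr0.
Qed.
Lemma starD x y : star (x + y) = star x + star y.
Proof. by case: hstar => L _ _; have := L 1 x y; rewrite !scale1r. Qed.
Lemma starZ a x : star (a *: x) = a *: star x.
Proof. by case: hstar => L _ _; have := L a x 0; rewrite !addr0 star0 addr0. Qed.
Lemma star_sum (I : Type) (r : seq I) (F : I -> H) :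
  star (\sum_(i <- r) F i) = \sum_(i <- r) star (F i).
Proof. exact: (big_morph star starD star0). Qed.
Lemma star1 : star 1 = 1.
Proof. by have := starM (star 1) 1; rewrite mulr1 starK mulr1 => E; rewrite -E. Qed.

Lemma uniqB : uniq B. Proof. by case: hB => /andP[_ /free_uniq]. Qed.
Lemma tauB b c : b \in B -> c \in B -> tau (b * star c) = (b == c)%:R.
Proof. by case: hB => _ _; apply. Qed.
Lemma starB b : b \in B -> star b \in B.
Proof. by case: hB => _ E _ bB; rewrite -E; apply: map_f. Qed.
Lemma star_perm : perm_eq (map star B) B.
Proof.
case: hB => _ E _; apply: uniq_perm => //; last exact: uniqB.
by rewrite map_inj_uniq ?uniqB //; apply: (can_inj starK).
Qed.
Lemma sum_star (V : nmodType) (F : H -> V) :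
  \sum_(b <- B) F (star b) = \sum_(b <- B) F b.
Proof. by rewrite -(big_map star xpredT); apply: perm_big; apply: star_perm. Qed.

Lemma span_zero (f : H -> K) : slin f -> (forall b, b \in B -> f b = 0) ->
  forall z, f z = 0.
Proof.
move=> hf H0 z.
have zB : z \in <<in_tuple B>>%VS.
  by case: hB => /andP[/eqP -> _] _ _; apply: memvf.
rewrite (coord_span zB) (slin_sum hf) big1 // => i _.
by rewrite (slinZ hf) H0 ?mulr0 // mem_nth.
Qed.

Lemma slin_tau_mull y : slin (fun z => tau (y * z)).
Proof.
by move=> a u v; rewrite mulrDr -scalerAr; apply: tau_slin.
Qed.

Lemma sum_delta (F : H -> K) c : c \in B ->
  \sum_(b <- B) F b * (b == c)%:R = F c.
Proof.
move=> cB; rewrite (bigD1_seq c) //= ?uniqB // eqxx mulr1 big1 ?addr0 //.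
by move=> b /negbTE ->; rewrite mulr0.
Qed.

Lemma expand x : x = \sum_(b <- B) tau (x * star b) *: b.
Proof.
apply/eqP; rewrite -subr_eq0; apply/eqP; apply: tau_nondeg.
apply: span_zero; first exact: slin_tau_mull.
move=> c cB; rewrite mulrBl (slinB tau_slin) mulr_suml (slin_sum tau_slin).
have -> : \sum_(b <- B) tau ((tau (x * star b) *: b) * c)
        = \sum_(b <- B) tau (x * star b) * (b == star c)%:R.
  apply: eq_big_seq => b bB; rewrite -scalerAl (slinZ tau_slin).
  by have := tauB bB (starB cB); rewrite starK => ->.
by rewrite sum_delta ?starB // starK subrr.
Qed.

Lemma expand2 x : x = \sum_(b <- B) tau (x * b) *: star b.
Proof.
rewrite {1}(expand x) -(sum_star (fun b => tau (x * star b) *: b)).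
by apply: eq_bigr => b _; rewrite starK.
Qed.

Lemma tau_star x : tau (star x) = tau x.
Proof.
apply/eqP; rewrite -subr_eq0; apply/eqP; move: x.
apply: span_zero.
  move=> a u v; rewrite starD starZ !(slinD tau_slin) !(slinZ tau_slin).
  by rewrite mulrBr opprD addrACA.
move=> b bB; apply/eqP; rewrite subr_eq0; apply/eqP.
have E1 : tau b = tau (b * star 1) by rewrite star1 mulr1.
rewrite E1 (expand 1) star_sum mulr_sumr (slin_sum tau_slin).
rewrite (eq_big_seq (fun c => tau (1 * star c) * (c == b)%:R)).
  by rewrite sum_delta // mul1r.
move=> c cB; by rewrite starZ -scalerAr (slinZ tau_slin) (tauB bB cB) eq_sym.
Qed.

Lemma inv_gen (phi psi : H -> K) h : slin phi -> slin psi ->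
  \sum_(b <- B) phi (b * star h) * psi b = \sum_(b <- B) phi b * psi (b * h).
Proof.
move=> hphi hpsi.
have L : forall b, phi (b * star h) = \sum_(c <- B) tau (b * star h * star c) * phi c.
  move=> b; rewrite {1}(expand (b * star h)) (slin_sum hphi).
  by apply: eq_bigr => c _; rewrite (slinZ hphi).
have R : forall b, psi (b * h) = \sum_(c <- B) tau (b * h * star c) * psi c.
  move=> b; rewrite {1}(expand (b * h)) (slin_sum hpsi).
  by apply: eq_bigr => c _; rewrite (slinZ hpsi).
transitivity (\sum_(b <- B) \sum_(c <- B) tau (c * h * star b) * phi c * psi b).
  apply: eq_bigr => b _; rewrite L mulr_suml; apply: eq_bigr => c _.
  by rewrite -[in RHS]tau_star !starM starK mulrA.
transitivity (\sum_(b <- B) \sum_(c <- B) tau (b * h * star c) * phi b * psi c).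
  by rewrite exchange_big.
apply: eq_bigr => b _; rewrite R mulr_sumr; apply: eq_bigr => c _.
by rewrite mulrCA mulrA.
Qed.

Lemma ortho_gen (phi psi : H -> K) e : slin psi ->
  (forall y, tau (y * e) = phi y) ->
  \sum_(b <- B) phi b * psi (star b) = psi e.
Proof.
move=> hpsi He; rewrite (expand2 e) (slin_sum hpsi).
by apply: eq_bigr => b _; rewrite (slinZ hpsi) tauC He.
Qed.

End Alg.

Section Diag.
Variable K : fieldType.

Definition aniso n (M : 'M[K]_n) :=
  forall v : 'cV_n, v != 0 -> (v^T *m M *m v) 0 0 != 0.

Lemma trmxZ' m n (a : K) (A : 'M[K]_(m, n)) : (a *: A)^T = a *: A^T.
Proof. by apply/matrixP => i j; rewrite !mxE. Qed.

Lemma block_offdiag n (a : K) (D : 'M[K]_n) (i j : 'I_(1 + n)) :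
  (forall k1 k2, k1 != k2 -> D k1 k2 = 0) -> i != j ->
  block_mx a%:M 0 0 D i j = 0.
Proof.
move=> HD; rewrite -(splitK i) -(splitK j).
case: (split i) => [i'|k]; case: (split j) => [j'|k'] /=.
- by rewrite !ord1 eqxx.
- by rewrite block_mxEur mxE.
- by rewrite block_mxEdl mxE.
- move=> ne; rewrite block_mxEdr; apply: HD; apply: contra ne => /eqP ->//.
Qed.

Lemma diagonalize n (M : 'M[K]_n) : M^T = M -> aniso M ->
  exists2 Q : 'M[K]_n, Q \in unitmx & forall i j, i != j -> (Q^T *m M *m Q) i j = 0.
Proof.
elim: n M => [|n IH] M sM aM.
  by exists 1%:M; [rewrite unitmx1 | move=> [] //].
suff : forall M : 'M[K]_(1 + n), M^T = M -> aniso M ->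
  exists2 Q : 'M[K]_(1 + n), Q \in unitmx & forall i j, i != j -> (Q^T *m M *m Q) i j = 0.
  by apply.
move=> {sM aM}M sM aM.
pose a := ulsubmx M 0 0.
pose u := ursubmx M.
pose D := drsubmx M.
have EA : ulsubmx M = a%:M.
  by apply/matrixP => i j; rewrite !ord1 [in RHS]mxE eqxx mulr1n.
have T : M = block_mx (ulsubmx M)^T (dlsubmx M)^T (ursubmx M)^T (drsubmx M)^T.
  by rewrite -tr_block_mx submxK sM.
have Edl : dlsubmx M = u^T.
  by have := congr1 ursubmx T; rewrite block_mxKur /u => ->; rewrite trmxK.
have ED : D^T = D.
  by have := congr1 drsubmx T; rewrite block_mxKdr /D => <-.
have EM : M = block_mx a%:M u u^T D by rewrite -EA -Edl /u /D submxK.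
have a0 : a != 0.
  have := aM (col_mx 1%:M 0); rewrite EM tr_col_mx mul_row_block mul_row_col.
  rewrite !trmx0 !trmx1 !mul0mx !mul1mx !addr0 mulmx0 addr0 mulmx1 mxE eqxx mulr1n; apply.
  apply/negP => /eqP/matrixP/(_ (lshift n 0) 0); rewrite col_mxEu !mxE eqxx /= => /eqP.
  by rewrite oner_eq0.
pose Q1 : 'M[K]_(1 + n) := block_mx 1%:M (- a^-1 *: u) 0 1%:M.
pose D' := D - a^-1 *: (u^T *m u).
have EQ1 : Q1^T *m M *m Q1 = block_mx a%:M 0 0 D'.
  rewrite EM /Q1 tr_block_mx !mulmx_block !trmx0 !trmx1 !mul1mx !mul0mx !mulmx0.
  have Z1 : a%:M *m (- a^-1 *: u) + u = 0.
    by rewrite mul_scalar_mx scalerA mulrN mulfV // scaleN1r addNr.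
  have Z2 : (- a^-1 *: u)^T *m a%:M + u^T = 0.
    by rewrite trmxZ' mul_mx_scalar scalerA mulrN mulfV // scaleN1r addNr.
  rewrite !addr0 !mulmx1 Z1 Z2 mul0mx add0r trmxZ' -scalemxAl scaleNr addrC.
  by [].
have uQ1 : Q1 \in unitmx by rewrite unitmxE /Q1 det_ublock !det1 mulr1 unitr1.
have sD' : D'^T = D'.
  by rewrite /D' raddfB /= trmxZ' trmx_mul trmxK ED.
have aD' : aniso D'.
  move=> v' v'0.
  have v0 : Q1 *m col_mx 0 v' != 0.
    apply/negP => /eqP E; move: v'0; rewrite -(col_mxKd (0 : 'M_(1,1)) v').
    by rewrite -(mulKmx uQ1 (col_mx 0 v')) E mulmx0 linear0 eqxx.
  have := aM _ v0; rewrite trmx_mul !mulmxA -(mulmxA _ Q1^T) -(mulmxA _ (Q1^T *m M)).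
  rewrite -[_ *m M *m Q1]mulmxA [Q1^T *m (M *m Q1)]mulmxA EQ1 tr_col_mx trmx0.
  by rewrite mul_row_block mul_row_col !mul0mx !mulmx0 !add0r.
have [Q' uQ' HQ'] := IH D' sD' aD'.
exists (Q1 *m block_mx 1%:M 0 0 Q').
  by rewrite unitmx_mul uQ1 unitmxE det_ublock det1 mul1r -unitmxE.
have -> : (Q1 *m block_mx 1%:M 0 0 Q')^T *m M *m (Q1 *m block_mx 1%:M 0 0 Q')
    = block_mx a%:M 0 0 (Q'^T *m D' *m Q').
  rewrite trmx_mul !mulmxA -(mulmxA _ Q1^T) -(mulmxA _ (Q1^T *m M)).
  rewrite -[_ *m M *m Q1]mulmxA [Q1^T *m (M *m Q1)]mulmxA EQ1.
  rewrite tr_block_mx !trmx0 trmx1 !mulmx_block !mul0mx !mulmx0 !mul1mx !mulmx1.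
  by rewrite !addr0 !add0r mul0mx.
by move=> i j; apply: block_offdiag.
Qed.
End Diag.

Lemma trace_delta (K : fieldType) n (A : 'M[K]_n) i j : \tr (A *m delta_mx j i) = A i j.
Proof.
rewrite /mxtrace (bigD1 i) //= big1 ?addr0.
  rewrite mxE (bigD1 j) //= big1 ?addr0; first by rewrite mxE !eqxx mulr1.
  by move=> k kj; rewrite mxE (negbTE kj) mulr0.
move=> k ki; rewrite mxE big1 // => p _; rewrite mxE (negbTE ki) andbF mulr0.
by [].
Qed.

Section RepLin.
Variables (K : fieldType) (H : falgType K) (n : nat) (s : H -> 'M[K]_n).
Hypothesis hs : is_mx_repr s.
Lemma rep_slin_v m (w : 'M[K]_(n, m)) i j : slin (fun x => (s x *m w) i j).
Proof.
case: hs => L _ _ a x y; rewrite L mulmxDl -scalemxAl mxE [X in X + _]mxE //.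
Qed.
Lemma rep_slin i j : slin (fun x => s x i j).
Proof. by move=> a x y; have := rep_slin_v 1%:M i j a x y; rewrite !mulmx1. Qed.
Lemma rep0 : s 0 = 0.
Proof.
by apply/matrixP => i j; rewrite (slin0 (rep_slin i j)) mxE.
Qed.
Lemma repM x y : s (x * y) = s x *m s y. Proof. by case: hs. Qed.
End RepLin.

Lemma delta_mul_entry (K : fieldType) n m (w : 'M[K]_(n, m)) (i k : 'I_n) (j : 'I_m) :
  (delta_mx i k *m w) i j = w k j.
Proof.
rewrite mxE (bigD1 k) //= big1 ?addr0; first by rewrite mxE !eqxx mul1r.
by move=> p pk; rewrite mxE (negbTE pk) andbF mul0r.
Qed.

Lemma entry_ex (K : fieldType) n (A : 'M[K]_n) (p q : 'I_n) :
  ((delta_mx p (0 : 'I_1))^T *m A *m delta_mx q (0 : 'I_1)) 0 0 = A p q.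
Proof. by rewrite trmx_delta -rowE -colE !mxE. Qed.

Section Rep.
Variables (K : fieldType) (H : falgType K) (Lambda : finType) (d : Lambda -> nat)
  (rho : forall l, H -> 'M[K]_(d l)) (tau : H -> K) (c : Lambda -> K) (star : H -> H).
Variables (G : zmodType) (le : rel G) (nu : K -> option G).
Hypothesis hG : ordered_abelian_group le.
Hypothesis hnu : surj_valuation le nu.
Hypothesis hF : residue_formally_real le nu.
Hypothesis hss : split_semisimple_data rho.
Hypothesis htau : symmetrizing_form tau.
Hypothesis hchi : forall h : H, tau h = \sum_(l : Lambda) (c l)^-1 * chi rho l h.
Hypothesis hstar : linear_involutive_antiaut star.
Variable l : Lambda.

Definition mfam (X : 'M[K]_(d l)) (m : Lambda) : 'M[K]_(d m) :=
  match @eqP _ m l with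
  | ReflectT e => eq_rect_r (fun m => 'M[K]_(d m)) X e
  | ReflectF _ => 0 end.

Lemma mfam_l X : mfam X l = X.
Proof. rewrite /mfam; case: eqP => // e; by rewrite (eq_irrelevance e erefl). Qed.
Lemma mfam_n X m : m != l -> mfam X m = 0.
Proof. by rewrite /mfam; case: eqP. Qed.

Lemma dl_gt0 : (0 < d l)%N. Proof. by case: hss. Qed.
Definition i0 : 'I_(d l) := Ordinal dl_gt0.

Section Eq.
Variables (s : H -> 'M[K]_(d l)) (P : 'M[K]_(d l)).
Hypothesis hs : is_mx_repr s.
Hypothesis hPu : P \in unitmx.
Hypothesis hP : forall h, P *m s h = rho l h *m P.

Lemma s_conj h : s h = invmx P *m rho l h *m P.
Proof. by rewrite -mulmxA -hP mulKmx. Qed.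

Lemma elem X : exists e, s e = X /\ forall y, tau (y * e) = (c l)^-1 * \tr (s y *m X).
Proof.
case: hss => _ reps _ surj.
have [e He] := surj (mfam (P *m X *m invmx P)).
exists e; split.
  by rewrite s_conj He mfam_l !mulmxA mulVmx // mul1mx mulmxKV.
move=> y; rewrite hchi (bigD1 l) //= big1 ?addr0.
  rewrite /chi (repM (reps l)) He mfam_l !mulmxA mxtrace_mulC !mulmxA.
  by rewrite -s_conj.
move=> m ml; rewrite /chi (repM (reps m)) He mfam_n // mulmx0 mxtrace0 mulr0 //.
Qed.

Lemma cl0 : c l != 0.
Proof.
pose i0 : 'I_(d l) := Ordinal dl_gt0.
have [e [Ee He]] := elem (delta_mx i0 i0).
apply/negP => /eqP c0.
have e0 : e = 0.
  apply: (tau_nondeg htau) => y; rewrite (tauC htau) He c0 invr0 mul0r //.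
move: Ee; rewrite e0 (rep0 hs) => /matrixP /(_ i0 i0); rewrite !mxE !eqxx /=.
by move/eqP; rewrite eq_sym oner_eq0.
Qed.

Lemma ortho (B : seq H) : star_symmetric_basis tau star B ->
  forall i j, \sum_(b <- B) s b i j * s (star b) j i = c l.
Proof.
move=> hB i j.
have [e [Ee He]] := elem (delta_mx j i).
have := ortho_gen htau hstar hB (phi := fun y => (c l)^-1 * s y i j) (rep_slin hs j i).
move=> /(_ e) E; rewrite Ee mxE !eqxx /= in E.
have -> : \sum_(b <- B) s b i j * s (star b) j i
    = c l * \sum_(b <- B) (c l)^-1 * s b i j * s (star b) j i.
  rewrite big_distrr; apply: eq_bigr => b _.
  by rewrite /= !mulrA mulfV ?mul1r // cl0.
by rewrite E ?mulr1 // => y; rewrite He trace_delta.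
Qed.

End Eq.

Section Form.
Variables (s : H -> 'M[K]_(d l)) (P : 'M[K]_(d l)).
Hypothesis hs : is_mx_repr s.
Hypothesis hPu : P \in unitmx.
Hypothesis hP : forall h, P *m s h = rho l h *m P.
Variable B : seq H.
Hypothesis hB : star_symmetric_basis tau star B.

Definition Mf := \sum_(b <- B) (row i0 (s b))^T *m row i0 (s b).
Definition ff (v w : 'cV[K]_(d l)) := (v^T *m Mf *m w) 0 0.

Lemma ffE v w : ff v w = \sum_(b <- B) (s b *m v) i0 0 * (s b *m w) i0 0.
Proof.
rewrite /ff /Mf mulmx_sumr mulmx_suml summxE; apply: eq_bigr => b _.
rewrite !mulmxA -trmx_mul -mulmxA -!row_mul mxE big_ord1 !mxE.
by [].
Qed.

Lemma ff_linl a u v w : ff (a *: u + v) w = a * ff u w + ff v w.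
Proof.
rewrite !ffE big_distrr -big_split; apply: eq_bigr => b _ /=.
by rewrite mulmxDr -scalemxAr !mxE mulrDl mulrA.
Qed.
Lemma ff_sym v w : ff v w = ff w v.
Proof. by rewrite !ffE; apply: eq_bigr => b _; rewrite mulrC. Qed.
Lemma ff_linr a u v w : ff u (a *: v + w) = a * ff u v + ff u w.
Proof. by rewrite ff_sym ff_linl !(ff_sym u). Qed.

Lemma ff_inv h v w : ff (s (star h) *m v) w = ff v (s h *m w).
Proof.
rewrite !ffE.
rewrite (eq_bigr (fun b => (s (b * star h) *m v) i0 0 * (s b *m w) i0 0)); last first.
  by move=> b _; rewrite (repM hs) mulmxA.
rewrite (inv_gen htau hstar hB h (rep_slin_v hs v i0 0) (rep_slin_v hs w i0 0)).
by apply: eq_bigr => b _; rewrite (repM hs) mulmxA.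
Qed.

Lemma ff_sos w : ff w w = \sum_(y <- map (fun b => (s b *m w) i0 0) B) y ^+ 2.
Proof. by rewrite ffE big_map; apply: eq_bigr => b _; rewrite expr2. Qed.

Lemma ff_pos w : ff w w = 0 -> w = 0.
Proof.
rewrite ff_sos => /(sos_eq0 hG hnu hF) H0.
have Z : forall z, (s z *m w) i0 0 = 0.
  apply: (span_zero hB (rep_slin_v hs w i0 0)) => b bB.
  by apply: H0; apply: map_f.
apply/matrixP => k j; rewrite !ord1 mxE.
have [e [Ee _]] := elem hPu hP (delta_mx i0 k).
by have := Z e; rewrite Ee delta_mul_entry.
Qed.

Lemma ff_val w : w != 0 -> exists g, nu (ff w w) = Some (g + g).
Proof.
move=> w0; have [hs'|hs'] := boolP (has (fun y => y != 0) (map (fun b => (s b *m w) i0 0) B)).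
  have [g [Eg _]] := sos_val hG hnu hF hs'; exists g. rewrite ff_sos. exact: Eg.
exfalso; move/negP: w0; apply; apply/eqP; apply: ff_pos.
rewrite ff_sos big1_seq // => y ys; move/hasPn: hs' => /(_ y ys).
by rewrite negbK => /eqP ->; rewrite expr0n.
Qed.

Lemma Mf_inv h : (s (star h))^T *m Mf = Mf *m s h.
Proof.
apply/matrixP => p q; rewrite -[LHS]entry_ex -[RHS]entry_ex.
have := ff_inv h (delta_mx p 0) (delta_mx q 0); rewrite /ff trmx_mul !mulmxA.
by [].
Qed.

Lemma Mf_sym : Mf^T = Mf.
Proof.
apply/matrixP => p q; rewrite mxE -[LHS]entry_ex -[RHS]entry_ex.
by have := ff_sym (delta_mx q 0) (delta_mx p 0); rewrite /ff.
Qed.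

Lemma ffZl a u w : ff (a *: u) w = a * ff u w.
Proof. by rewrite !ffE big_distrr; apply: eq_bigr => b _; rewrite -scalemxAr mxE /= mulrA. Qed.
Lemma ffZr a u w : ff u (a *: w) = a * ff u w.
Proof. by rewrite ff_sym ffZl ff_sym. Qed.

Lemma Mf_aniso : aniso Mf.
Proof. by move=> v v0; apply/eqP => /ff_pos; apply/eqP. Qed.

End Form.

Lemma diag_delta n (r : 'rV[K]_n) (i : 'I_n) :
  diag_mx r *m delta_mx i (0 : 'I_1) = r 0 i *: delta_mx i 0.
Proof.
apply/matrixP => p q; rewrite mul_diag_mx !mxE.
by case: (eqVneq p i) => [->|]; rewrite ?mulr1 ?mulr0.
Qed.

Lemma entry_form n (M X : 'M[K]_n) (p q : 'I_n) :
  (X^T *m M *m X) p q = ((X *m delta_mx p (0 : 'I_1))^T *m M *m (X *m delta_mx q (0 : 'I_1))) 0 0.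
Proof. by rewrite -(entry_ex (X^T *m M *m X) p q) trmx_mul !mulmxA. Qed.

Section PartC.
Variables (s : H -> 'M[K]_(d l)) (P : 'M[K]_(d l)).
Hypothesis hs : is_mx_repr s.
Hypothesis hPu : P \in unitmx.
Hypothesis hP : forall h, P *m s h = rho l h *m P.
Variable B : seq H.
Hypothesis hB : star_symmetric_basis tau star B.

Lemma partc : exists a : G, nu (c l) = Some (- (a + a)) /\
  exists rho' : H -> 'M[K]_(d l),
    [/\ is_mx_repr rho', mx_repr_equiv rho' (rho l)
      & balanced le nu tau star rho' a].
Proof.
have [Q uQ HQ] := diagonalize (Mf_sym s B) (Mf_aniso hs hPu hP hB).
pose cl i := Q *m delta_mx i (0 : 'I_1).
have clnz i : cl i != 0.
  apply/negP => /eqP E; have := congr1 (mulmx (invmx Q)) E.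
  rewrite mulKmx // mulmx0 => /matrixP /(_ i 0); rewrite !mxE !eqxx /=.
  by move/eqP; rewrite oner_eq0.
have ex_t : forall i, exists t : K, exists g : G,
    nu (ff s B (cl i) (cl i)) = Some (g + g) /\ nu t = Some (- g).
  move=> i; have [g Eg] := ff_val hs hPu hP hB (clnz i).
  have [t Et] := nu_surj hnu (- g); by exists t, g.
have [t Ht] := fin_all_exists ex_t.
have t0 i : t i != 0.
  have [g [_ E]] := Ht i; apply/eqP => t0; move: E; rewrite t0 (nu0 hnu).
  by [].
pose Q2 := Q *m diag_mx (\row_i t i).
have uQ2 : Q2 \in unitmx.
  rewrite unitmx_mul uQ unitmxE det_diag unitfE; apply/prodf_neq0 => i _.
  by rewrite mxE.
have cl2 i : Q2 *m delta_mx i 0 = t i *: cl i.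
  by rewrite /Q2 -mulmxA diag_delta mxE scalemxAr.
clearbody Q2.
pose D2 := Q2^T *m Mf s B *m Q2.
have D2E p q : D2 p q = t p * t q * ff s B (cl p) (cl q).
  transitivity (ff s B (Q2 *m delta_mx p 0) (Q2 *m delta_mx q 0)).
    exact: (entry_form (Mf s B) Q2 p q).
  by rewrite !cl2 ffZl ffZr mulrA.
have D2off p q : p != q -> D2 p q = 0.
  move=> pq; rewrite D2E; have := HQ p q pq.
  rewrite (entry_form (Mf s B) Q p q) => E.
  have -> : ff s B (cl p) (cl q) = 0 by rewrite -E.
  by rewrite mulr0.
have D2val i : nu (D2 i i) = Some 0.
  have [g [Eg Et]] := Ht i.
  rewrite D2E !(nuM hnu) Et Eg /=; congr Some.
  by rewrite -opprD addNr.
have D20 i : D2 i i != 0.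
  by apply/eqP => E; have := D2val i; rewrite E (nu0 hnu).
pose r h := invmx Q2 *m s h *m Q2.
have rrep : is_mx_repr r.
  case: hs => L R1 RM; split.
  - move=> a x y; rewrite /r L mulmxDr mulmxDl -scalemxAr -scalemxAl //.
  - by rewrite /r R1 mulmx1 mulVmx.
  - by move=> x y; rewrite /r RM !mulmxA mulmxK.
have rP h : (P *m Q2) *m r h = rho l h *m (P *m Q2).
  by rewrite /r !mulmxA mulmxK // hP.
have uPQ2 : P *m Q2 \in unitmx by rewrite unitmx_mul hPu uQ2.
have rinv h : (r (star h))^T *m D2 = D2 *m r h.
  rewrite /r /D2 !trmx_mul trmx_inv.
  have E1 : (invmx Q2)^T = invmx Q2^T by rewrite trmx_inv.
  rewrite !mulmxA mulmxKV ?unitmx_tr // -(mulmxA _ (s (star h))^T) Mf_inv //.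
  by rewrite !mulmxA mulmxK.
clearbody r D2.
have rkey h i j : r (star h) j i * D2 j j = D2 i i * r h i j.
  have := rinv h; move/matrixP => /(_ i j); rewrite !mxE.
  rewrite (bigD1 j) //= big1 ?addr0; last by move=> k kj; rewrite D2off // mulr0.
  rewrite (bigD1 i) //= big1 ?addr0; last by move=> k ki; rewrite D2off ?mul0r // eq_sym.
  by [] || (move=> E; rewrite -E; by rewrite mxE).
have sq B' (hB' : star_symmetric_basis tau star B') i j :
    \sum_(y <- map (fun b => r b i j) B') y ^+ 2 = c l * D2 j j / D2 i i.
  have := ortho rrep uPQ2 rP hB' i j.
  rewrite big_map => <-; rewrite -mulrA mulr_suml; apply: eq_bigr => b _.
  rewrite mulrA -(mulrA (r b i j)) rkey expr2 [D2 i i * _]mulrC mulrA mulfK //.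
have [g [Eg _]] : exists g, nu (c l) = Some (g + g) /\ True.
  have hs' : has (fun y => y != 0) (map (fun b => r b i0 i0) B).
    apply/negPn/negP => /hasPn H0.
    have := sq B hB i0 i0; rewrite mulfK // big1_seq; last first.
      by move=> y ys; have := H0 y ys; rewrite negbK => /eqP ->; rewrite expr0n.
    by move/eqP; rewrite eq_sym (negbTE (cl0 hs hPu hP)).
  have [g [E _]] := sos_val hG hnu hF hs'.
  by exists g; rewrite -E sq // mulfK.
exists (- g); split; first by rewrite -opprD opprK.
exists r; split => //; first by exists (P *m Q2).
move=> B' hB' b bB' i j.
have hs' : has (fun y => y != 0) (map (fun b => r b i j) B').
  apply/negPn/negP => /hasPn H0.
  have := sq B' hB' i j; rewrite big1_seq; last first.
    by move=> y ys; have := H0 y ys; rewrite negbK => /eqP ->; rewrite expr0n.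
  move/eqP; rewrite eq_sym !mulf_eq0 invr_eq0 (negbTE (cl0 hs hPu hP)) !(negbTE (D20 _)).
  by [].
have [g' [E' Hg']] := sos_val hG hnu hF hs'.
have gg : g' = g.
  move: E'; rewrite sq // !(nuM hnu) Eg D2val (nuV hnu (D2val i)) /= oppr0 !addr0 => -[] E2.
  exact: (gdouble_inj hG (esym E2)).
rewrite opprK -gg; apply: Hg'; exact: map_f.
Qed.
End PartC.

End Rep.

End Aux.
Import Aux.

Theorem mainTheorem5
    (G : zmodType) (le : rel G) (K : fieldType) (nu : K -> option G)
    (H : falgType K) (Lambda : finType) (d : Lambda -> nat)
    (rho : forall l : Lambda, H -> 'M[K]_(d l))
    (tau : H -> K) (c : Lambda -> K) (star : H -> H) :
  ordered_abelian_group le ->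
  surj_valuation le nu ->
  residue_formally_real le nu ->
  split_semisimple_data rho ->
  symmetrizing_form tau ->
  (forall h : H, tau h = \sum_(l : Lambda) (c l)^-1 * chi rho l h) ->
  linear_involutive_antiaut star ->
  (exists B : seq H, star_symmetric_basis tau star B) ->
  forall (l : Lambda) (rhoV : H -> 'M[K]_(d l)),
    is_mx_repr rhoV -> mx_repr_equiv rhoV (rho l) ->
    (exists f : 'cV[K]_(d l) -> 'cV[K]_(d l) -> K,
       [/\ (forall (a : K) (u v w : 'cV[K]_(d l)), f (a *: u + v) w = a * f u w + f v w) /\
            (forall (a : K) (u v w : 'cV[K]_(d l)), f u (a *: v + w) = a * f u v + f u w),
           forall v w, f v w = f w v,
           forall (h : H) (v w : 'cV[K]_(d l)), f (rhoV (star h) *m v) w = f v (rhoV h *m w),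
           (forall w, sum_of_squares (f w w)) /\ (forall w, f w w = 0 -> w = 0)
         & forall w, w != 0 -> exists g : G, nu (f w w) = Some (g + g)])
    /\
    (exists a : G,
       nu (c l) = Some (- (a + a)) /\
       exists rho' : H -> 'M[K]_(d l),
         [/\ is_mx_repr rho', mx_repr_equiv rho' (rho l)
           & balanced le nu tau star rho' a]).
Proof.
move=> hG hnu hF hss htau hchi hstar [B hB] l rhoV hV [P hPu hP].
split; last exact: (partc hG hnu hF hss htau hchi hstar hV hPu hP hB).
exists (ff hss rhoV B); split.
- split; [exact: ff_linl | exact: ff_linr].
- exact: ff_sym.
- exact: (ff_inv hss htau hstar hV hB).
- split.
    by move=> w; exists (map (fun b => (rhoV b *m w) (i0 hss l) 0) B); apply: ff_sos.
  exact: (ff_pos hG hnu hF hchi hV hPu hP hB).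
- exact: (ff_val hG hnu hF hss hchi hV hPu hP hB).
Qed.
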